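(* Let $M$ be a smooth manifold, $g$ a pseudo-Riemannian metric on $M$ with Levi-Civita connection $\nabla$, and $J$ a $(1,1)$-tensor field on $M$ with $J^2=pJ+qI$ for real numbers $p,q$ satisfying $p^2+4q>0$, such that $J$ is $g$-symmetric. Then the following assertions are equivalent: (i) the distributions $\mathcal{D}$ and $\mathcal{D}'$ are both integrable; (ii) $N_J=0$; (iii) $L=0$ and $L'=0$; (iv) the Vidal connection $\tilde{\tilde{\nabla}}$ is torsion-free.
   Context: Put $\sigma_{\pm}:=\frac{p\pm\sqrt{p^2+4q}}{2}$ and define the projections $\mathcal{P}:=\frac{1}{\sqrt{p^2+4q}}(-J+\sigma_{+}I)$, $\mathcal{P}':=\frac{1}{\sqrt{p^2+4q}}(J-\sigma_{-}I)$. The metallic distributions are $\mathcal{D}:=\ker\mathcal{P}'=\{X: JX=\sigma_{-}X\}$ and $\mathcal{D}':=\ker\mathcal{P}=\{X: JX=\sigma_{+}X\}$. A distribution is integrable if it is involutive (closed under the Lie bracket). The Nijenhuis tensor is $N_J(X,Y):=J([JX,Y]+[X,JY]-J[X,Y])-[JX,JY]$. Define $H(X,Y):=\mathcal{P}'(\nabla_{\mathcal{P}X}\mathcal{P}Y)$, $H'(X,Y):=\mathcal{P}(\nabla_{\mathcal{P}'X}\mathcal{P}'Y)$, and the twisting tensors $L(X,Y):=\frac12[H(X,Y)-H(Y,X)]$, $L'(X,Y):=\frac12[H'(X,Y)-H'(Y,X)]$. The Vidal connection is $\tilde{\tilde{\nabla}}_XY:=\nabla_XY+\frac{1}{p^2+4q}[2J((\nabla_XJ)Y)-p(\nabla_XJ)Y+J((\nabla_YJ)X)+(\nabla_{JY}J)X-p(\nabla_YJ)X]$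 for vector fields $X,Y$. *)

(* Defs.v *)
(* Abstract (algebraic) model of the differential-geometric
   setting: A plays the role of C^oo(M) (a commutative R-algebra), V the role
   of the C^oo(M)-module of vector fields X(M), with its Lie bracket and its
   action by derivations on functions (a Lie–Rinehart algebra).  Tensor fields
   of type (1,1) are A-linear endomorphisms of V, a pseudo-Riemannian metric
   is a symmetric nondegenerate A-bilinear form V x V -> A, and the
   Levi-Civita connection is the affine connection which is torsion-free and
   metric. *)
From HB Require Import structures.
From mathcomp Require Import all_boot all_order all_algebra.
From mathcomp Require Import reals.
Set Implicit Arguments. Unset Strict Implicit. Unset Printing Implicit Defensive.
Import Order.TTheory GRing.Theory Num.Theory.
Local Open Scope ring_scope.

Section Geometry.
Variables (R : realType) (A : comAlgType R) (V : lmodType A).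

Definition rsc (r : R) (X : V) : V := (r%:A : A) *: X.

Record LieRinehart := {
  lbr : V -> V -> V;
  der : V -> A -> A;
  lbr_addl : forall X Y Z, lbr (X + Y) Z = lbr X Z + lbr Y Z;
  lbr_rscl : forall (r : R) X Y, lbr (rsc r X) Y = rsc r (lbr X Y);
  lbr_anti : forall X Y, lbr X Y = - lbr Y X;
  lbr_jacobi : forall X Y Z,
    lbr X (lbr Y Z) + lbr Y (lbr Z X) + lbr Z (lbr X Y) = 0;
  lbr_leibniz : forall X Y (f : A), lbr X (f *: Y) = f *: lbr X Y + der X f *: Y;
  der_addv : forall X Y f, der (X + Y) f = der X f + der Y f;
  der_scalev : forall (h : A) X f, der (h *: X) f = h * der X f;
  der_add : forall X f h, der X (f + h) = der X f + der X h;
  der_rscale : forall X (r : R) f, der X (r *: f) = r *: der X f;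
  der_mul : forall X f h, der X (f * h) = der X f * h + f * der X h;
  der_lbr : forall X Y f, der (lbr X Y) f = der X (der Y f) - der Y (der X f)
}.

Variable L : LieRinehart.

Definition pseudo_riemannian (g : V -> V -> A) : Prop :=
  [/\ forall X Y, g X Y = g Y X,
      forall X X' Y, g (X + X') Y = g X Y + g X' Y,
      forall (f : A) X Y, g (f *: X) Y = f * g X Y
    & forall X, (forall Y, g X Y = 0) -> X = 0].

Definition connection (nabla : V -> V -> V) : Prop :=
  [/\ forall X X' Y, nabla (X + X') Y = nabla X Y + nabla X' Y,
      forall (f : A) X Y, nabla (f *: X) Y = f *: nabla X Y,
      forall X Y Y', nabla X (Y + Y') = nabla X Y + nabla X Y'
    & forall X (f : A) Y, nabla X (f *: Y) = der L X f *: Y + f *: nabla X Y].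

Definition torsion_free (nabla : V -> V -> V) : Prop :=
  forall X Y, nabla X Y - nabla Y X - lbr L X Y = 0.

Definition levi_civita (g : V -> V -> A) (nabla : V -> V -> V) : Prop :=
  [/\ connection nabla, torsion_free nabla
    & forall X Y Z, der L X (g Y Z) = g (nabla X Y) Z + g Y (nabla X Z)].

Variables (J : V -> V) (p q : R).

Definition sqrtD : R := Num.sqrt (p ^+ 2 + 4%:R * q).
Definition sigma_plus : R := (p + sqrtD) / 2%:R.
Definition sigma_minus : R := (p - sqrtD) / 2%:R.

Definition projP (X : V) : V := rsc (sqrtD^-1) (- J X + rsc sigma_plus X).
Definition projP' (X : V) : V := rsc (sqrtD^-1) (J X - rsc sigma_minus X).

Definition distD (X : V) : Prop := projP' X = 0.
Definition distD' (X : V) : Prop := projP X = 0.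

(* integrable = involutive *)
Definition integrable (D : V -> Prop) : Prop :=
  forall X Y, D X -> D Y -> D (lbr L X Y).

Definition nijenhuis (X Y : V) : V :=
  J (lbr L (J X) Y + lbr L X (J Y) - J (lbr L X Y)) - lbr L (J X) (J Y).

Variable nabla : V -> V -> V.

Definition covJ (X Y : V) : V := nabla X (J Y) - J (nabla X Y).

Definition H (X Y : V) : V := projP' (nabla (projP X) (projP Y)).
Definition H' (X Y : V) : V := projP (nabla (projP' X) (projP' Y)).
Definition twistL (X Y : V) : V := rsc (2%:R^-1) (H X Y - H Y X).
Definition twistL' (X Y : V) : V := rsc (2%:R^-1) (H' X Y - H' Y X).

Definition vidal (X Y : V) : V :=
  nabla X Y + rsc ((p ^+ 2 + 4%:R * q)^-1)
    (rsc 2%:R (J (covJ X Y)) - rsc p (covJ X Y) + J (covJ Y X)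
     + covJ (J Y) X - rsc p (covJ Y X)).

End Geometry.

(* Main.v *)
Require Import Defs.
From HB Require Import structures.
From mathcomp Require Import all_boot all_order all_algebra.
From mathcomp Require Import reals ring lra.
Import Order.TTheory GRing.Theory Num.Theory.
Local Open Scope ring_scope.

Inductive zexp : Type := ZAt of nat | Z0 | ZAdd of zexp & zexp | ZOpp of zexp.

Section ZAbel.
Variable V : zmodType.
Fixpoint zden (env : seq V) e : V := match e with
  | ZAt n => nth 0 env n | Z0 => 0 | ZAdd a b => zden env a + zden env b
  | ZOpp a => - zden env a end.
Fixpoint padd (s t : seq int) : seq int := match s, t with
  | [::], _ => t | _, [::] => s | a :: s', b :: t' => (a + b) :: padd s' t' end.
Definition pneg (s : seq int) := map (fun c => - c) s.
Definition pat n : seq int := rcons (nseq n 0) 1.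
Fixpoint znorm e := match e with
  | ZAt n => pat n | Z0 => [::] | ZAdd a b => padd (znorm a) (znorm b)
  | ZOpp a => pneg (znorm a) end.
Fixpoint lin (env : seq V) (cs : seq int) : V := match cs with
  | [::] => 0 | c :: cs' => (head 0 env) *~ c + lin (behead env) cs' end.
Lemma lin_padd s : forall t env, lin env (padd s t) = lin env s + lin env t.
Proof.
elim: s => [|a s IH] [|b t] env /=; rewrite ?add0r ?addr0 //.
by rewrite IH mulrzDr addrACA.
Qed.
Lemma lin_pneg s env : lin env (pneg s) = - lin env s.
Proof. elim: s env => [|a s IH] env /=; first by rewrite oppr0.
by rewrite IH mulrNz opprD. Qed.
Lemma lin_pat n env : lin env (pat n) = nth 0 env n.
Proof. elim: n env => [|n IH] [|x env] /=; rewrite ?mulr0z ?add0r ?addr0 //;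
  by rewrite IH ?nth_nil. Qed.
Lemma zden_norm env e : zden env e = lin env (znorm e).
Proof. elim: e => [n||a IHa b IHb|a IHa] /=.
- by rewrite lin_pat.
- by [].
- by rewrite lin_padd IHa IHb.
- by rewrite lin_pneg IHa. Qed.
Lemma lin_zero env cs : all (fun c => c == 0) cs -> lin env cs = 0.
Proof. elim: cs env => [|c cs IH] env //= /andP[/eqP -> h].
by rewrite mulr0z add0r IH. Qed.
Lemma zabel_ok env e1 e2 : all (fun c => c == 0) (znorm (ZAdd e1 (ZOpp e2))) ->
  zden env e1 = zden env e2.
Proof. move=> h; apply/eqP; rewrite -subr_eq0; apply/eqP.
by have := zden_norm env (ZAdd e1 (ZOpp e2)) => /= ->; rewrite lin_zero. Qed.
End ZAbel.

Ltac zidx x l := lazymatch l with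
  | ?y :: ?l' => match constr:(tt) with
     | _ => let _ := match constr:(tt) with _ => unify x y end in constr:(0%N)
     | _ => let n := zidx x l' in constr:(n.+1) end end.
Ltac zadd x l := match constr:(tt) with
  | _ => let n := zidx x l in l
  | _ => constr:(x :: l) end.
Ltac zatoms e l := lazymatch e with
  | @GRing.add _ ?a ?b => let l' := zatoms a l in zatoms b l'
  | @GRing.opp _ ?a => zatoms a l
  | @GRing.zero _ => l
  | _ => zadd e l end.
Ltac zreif e l := lazymatch e with
  | @GRing.add _ ?a ?b => let ra := zreif a l in let rb := zreif b l in constr:(ZAdd ra rb)
  | @GRing.opp _ ?a => let ra := zreif a l in constr:(ZOpp ra)
  | @GRing.zero _ => constr:(Z0)
  | _ => let n := zidx e l in constr:(ZAt n) end.
Ltac zabel := lazymatch goal with |- @eq ?T ?a ?b =>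
  let l0 := zatoms a (@nil T) in let l := zatoms b l0 in
  let ea := zreif a l in let eb := zreif b l in
  change (@zden _ l ea = @zden _ l eb); apply: zabel_ok; vm_compute; reflexivity end.

Section Main.
Variables (R : realType) (A : comAlgType R) (V : lmodType A) (L : LieRinehart V).
Variables (J : {linear V -> V}) (p q : R).
Hypothesis hJ : forall X, J (J X) = rsc p (J X) + rsc q X.
Hypothesis hD : 0 < p ^+ 2 + 4%:R * q.

Lemma rscA (r r' : R) (v : V) : rsc r (rsc r' v) = rsc (r * r') v.
Proof. by rewrite /rsc scalerA mulr_algl scalerA. Qed.
Lemma rscDl (r r' : R) (v : V) : rsc (r + r') v = rsc r v + rsc r' v.
Proof. by rewrite /rsc [X in X *: v]scalerDl scalerDl. Qed.
Lemma rscDr (r : R) (u v : V) : rsc r (u + v) = rsc r u + rsc r v.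
Proof. by rewrite /rsc scalerDr. Qed.
Lemma rscN (r : R) (v : V) : rsc r (- v) = - rsc r v.
Proof. by rewrite /rsc scalerN. Qed.
Lemma rscNl (r : R) (v : V) : rsc (- r) v = - rsc r v.
Proof. by rewrite /rsc scaleNr scaleNr. Qed.
Lemma rsc1 (v : V) : rsc 1 v = v.
Proof. by rewrite /rsc !scale1r. Qed.
Lemma rsc0 (v : V) : rsc 0 v = 0.
Proof. by rewrite /rsc !scale0r. Qed.
Lemma rscJ (r : R) (v : V) : J (rsc r v) = rsc r (J v).
Proof. by rewrite /rsc linearZ. Qed.
Lemma rsc2 (v : V) : rsc 2%:R v = v + v.
Proof. by rewrite /rsc !scaler_nat mulr2n. Qed.
Lemma rsc_eq0 (r : R) (v : V) : r != 0 -> rsc r v = 0 -> v = 0.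
Proof. move=> r0 h; by rewrite -[v]rsc1 -(mulVf r0) -rscA h /rsc scaler0. Qed.

Definition comb (Z : V) (a b : R) := rsc a (J Z) + rsc b Z.
Lemma cZ Z : Z = comb Z 0 1. Proof. by rewrite /comb rsc0 rsc1 add0r. Qed.
Lemma cJZ Z : J Z = comb Z 1 0. Proof. by rewrite /comb rsc0 rsc1 addr0. Qed.
Lemma c0 Z : 0 = comb Z 0 0. Proof. by rewrite /comb !rsc0 addr0. Qed.
Lemma cD Z e1 e2 a b c d : e1 = comb Z a b -> e2 = comb Z c d ->
  e1 + e2 = comb Z (a + c) (b + d).
Proof. move=> -> ->; rewrite /comb !rscDl; zabel. Qed.
Lemma cN Z e a b : e = comb Z a b -> - e = comb Z (- a) (- b).
Proof. move=> ->; rewrite /comb !rscNl opprD. done. Qed.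
Lemma cS Z e r a b : e = comb Z a b -> rsc r e = comb Z (r * a) (r * b).
Proof. move=> ->; by rewrite /comb rscDr !rscA. Qed.
Lemma cJ Z e a b : e = comb Z a b -> J e = comb Z (a * p + b) (a * q).
Proof. move=> ->; rewrite /comb raddfD /= !rscJ hJ rscDr !rscA rscDl; zabel. Qed.
Lemma comb_eqP Z e1 e2 a b c d : e1 = comb Z a b -> e2 = comb Z c d ->
  a = c -> b = d -> e1 = e2.
Proof. by move=> -> -> -> ->. Qed.

Ltac creif := first [ exact: c0 | exact: cZ | exact: cJZ
  | (apply: cD; [creif | creif]) | (apply: cN; creif)
  | (apply: cS; creif) | (apply: cJ; creif) ].
Ltac ctac Z := apply: (@comb_eqP Z); [creif | creif | | ].

Lemma sq_pos : 0 < sqrtD p q.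
Proof. by rewrite /sqrtD sqrtr_gt0. Qed.
Lemma sq_sq : sqrtD p q ^+ 2 = p ^+ 2 + 4%:R * q.
Proof. by rewrite /sqrtD sqr_sqrtr // ltW. Qed.
Lemma sq_neq0 : sqrtD p q != 0.
Proof. by rewrite gt_eqF // sq_pos. Qed.

Lemma qE : q = (sqrtD p q ^+ 2 - p ^+ 2) / 4%:R.
Proof. by rewrite sq_sq; field. Qed.

Ltac rsolve := rewrite /sigma_plus /sigma_minus; move: sq_neq0 qE;
  generalize (sqrtD p q);
  let s := fresh "s" in let hs0 := fresh "hs0" in let hq := fresh "hq" in
  intros s hs0 hq; try rewrite hq; field; try exact hs0; try done.

Local Notation P := (projP J p q).
Local Notation P' := (projP' J p q).
Local Notation N := (nijenhuis L J).

Lemma JP X : J (P X) = rsc (sigma_minus p q) (P X).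
Proof. rewrite /projP; ctac X; rsolve. Qed.
Lemma JP' X : J (P' X) = rsc (sigma_plus p q) (P' X).
Proof. rewrite /projP'; ctac X; rsolve. Qed.
Lemma PP' X : P X + P' X = X.
Proof. rewrite /projP /projP'; ctac X; rsolve. Qed.
Lemma P'P X : P' (P X) = 0.
Proof. rewrite /projP /projP'; ctac X; rsolve. Qed.
Lemma PP'0 X : P (P' X) = 0.
Proof. rewrite /projP /projP'; ctac X; rsolve. Qed.
Lemma P'B X Y : P' (X - Y) = P' X - P' Y.
Proof. rewrite /projP' /rsc (raddfB J) !(scalerBr, scalerDr, scalerN, opprD); zabel. Qed.
Lemma PB X Y : P (X - Y) = P X - P Y.
Proof. rewrite /projP /rsc (raddfB J) !(scalerBr, scalerDr, scalerN, opprD); zabel. Qed.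

Lemma lbr_rscr (r : R) X Y : lbr L X (rsc r Y) = rsc r (lbr L X Y).
Proof. by rewrite (lbr_anti L) (lbr_rscl L) [lbr L Y X](lbr_anti L) rscN opprK. Qed.
Lemma lbr_addr X Y Y' : lbr L X (Y + Y') = lbr L X Y + lbr L X Y'.
Proof. by rewrite (lbr_anti L) (lbr_addl L) opprD -!(lbr_anti L). Qed.

Lemma N_eig a b X Y : J X = rsc a X -> J Y = rsc b Y ->
  N X Y = comb (lbr L X Y) (a + b - p) (- (a * b) - q).
Proof.
move=> hX hY; rewrite /nijenhuis hX hY (lbr_rscl L) lbr_rscr (lbr_rscl L) lbr_rscr.
apply: (@comb_eqP (lbr L X Y)); [creif | rewrite /comb; reflexivity | | ].
- rsolve.
- rsolve.
Qed.

Lemma ND X Y : J X = rsc (sigma_minus p q) X -> J Y = rsc (sigma_minus p q) Y ->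
  N X Y = rsc (- (sqrtD p q ^+ 2)) (P' (lbr L X Y)).
Proof. move=> hX hY; rewrite (N_eig _ _ _ _ hX hY) /projP'; ctac (lbr L X Y); rsolve. Qed.
Lemma ND' X Y : J X = rsc (sigma_plus p q) X -> J Y = rsc (sigma_plus p q) Y ->
  N X Y = rsc (- (sqrtD p q ^+ 2)) (P (lbr L X Y)).
Proof. move=> hX hY; rewrite (N_eig _ _ _ _ hX hY) /projP; ctac (lbr L X Y); rsolve. Qed.
Lemma NM X Y : J X = rsc (sigma_minus p q) X -> J Y = rsc (sigma_plus p q) Y ->
  N X Y = 0.
Proof. move=> hX hY; rewrite (N_eig _ _ _ _ hX hY); ctac (lbr L X Y); rsolve. Qed.
Lemma NM' X Y : J X = rsc (sigma_plus p q) X -> J Y = rsc (sigma_minus p q) Y ->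
  N X Y = 0.
Proof. move=> hX hY; rewrite (N_eig _ _ _ _ hX hY); ctac (lbr L X Y); rsolve. Qed.

Lemma N_addl X X' Y : N (X + X') Y = N X Y + N X' Y.
Proof.
rewrite /nijenhuis (raddfD J X) !(lbr_addl L) !(raddfD J, raddfB J, raddfN J); zabel.
Qed.
Lemma N_addr X Y Y' : N X (Y + Y') = N X Y + N X Y'.
Proof.
rewrite /nijenhuis (raddfD J Y) !lbr_addr !(raddfD J, raddfB J, raddfN J); zabel.
Qed.

Lemma N_dec X Y : N X Y = rsc (- (sqrtD p q ^+ 2)) (P' (lbr L (P X) (P Y)))
  + rsc (- (sqrtD p q ^+ 2)) (P (lbr L (P' X) (P' Y))).
Proof.
rewrite -{1}(PP' X) -{1}(PP' Y) !N_addl !N_addr.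
rewrite (ND _ _ (JP X) (JP Y)) (ND' _ _ (JP' X) (JP' Y)) (NM _ _ (JP X) (JP' Y)).
rewrite (NM' _ _ (JP' X) (JP Y)) addr0 add0r. done.
Qed.

Lemma intD : integrable L (distD J p q) <-> forall X Y, P' (lbr L (P X) (P Y)) = 0.
Proof.
split.
- move=> h X Y; exact: (h _ _ (P'P X) (P'P Y)).
- move=> h X Y hX hY; rewrite /distD.
  have eX : P X = X by rewrite -{2}(PP' X) hX addr0.
  have eY : P Y = Y by rewrite -{2}(PP' Y) hY addr0.
  by rewrite -eX -eY h.
Qed.
Lemma intD' : integrable L (distD' J p q) <-> forall X Y, P (lbr L (P' X) (P' Y)) = 0.
Proof.
split.
- move=> h X Y; exact: (h _ _ (PP'0 X) (PP'0 Y)).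
- move=> h X Y hX hY; rewrite /distD'.
  have eX : P' X = X by rewrite -{2}(PP' X) hX add0r.
  have eY : P' Y = Y by rewrite -{2}(PP' Y) hY add0r.
  by rewrite -eX -eY h.
Qed.

Lemma s2_neq0 : - (sqrtD p q ^+ 2) != 0.
Proof. by rewrite oppr_eq0 expf_neq0 // sq_neq0. Qed.

Lemma N_of_int : (forall X Y, P' (lbr L (P X) (P Y)) = 0) ->
  (forall X Y, P (lbr L (P' X) (P' Y)) = 0) -> forall X Y, N X Y = 0.
Proof. by move=> h1 h2 X Y; rewrite N_dec h1 h2 /rsc !scaler0 addr0. Qed.
Lemma int_of_N : (forall X Y, N X Y = 0) ->
  (forall X Y, P' (lbr L (P X) (P Y)) = 0) /\ (forall X Y, P (lbr L (P' X) (P' Y)) = 0).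
Proof.
move=> h; split=> X Y; apply: (rsc_eq0 _ _ s2_neq0).
- by rewrite -(ND _ _ (JP X) (JP Y)).
- by rewrite -(ND' _ _ (JP' X) (JP' Y)).
Qed.

Variable nabla : V -> V -> V.
Hypothesis htf : torsion_free L nabla.
Lemma tf' U W : lbr L U W = nabla U W - nabla W U.
Proof. by apply/eqP; rewrite eq_sym -subr_eq0; apply/eqP; apply: htf. Qed.

Lemma twistE X Y : twistL J p q nabla X Y = rsc (2%:R^-1) (P' (lbr L (P X) (P Y))).
Proof. by rewrite /twistL /H -P'B -tf'. Qed.
Lemma twistE' X Y : twistL' J p q nabla X Y = rsc (2%:R^-1) (P (lbr L (P' X) (P' Y))).
Proof. by rewrite /twistL' /H' -PB -tf'. Qed.

Lemma SN X Y :
  (rsc 2%:R (J (covJ J nabla X Y)) - rsc p (covJ J nabla X Y) + J (covJ J nabla Y X)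
     + covJ J nabla (J Y) X - rsc p (covJ J nabla Y X))
  - (rsc 2%:R (J (covJ J nabla Y X)) - rsc p (covJ J nabla Y X) + J (covJ J nabla X Y)
     + covJ J nabla (J X) Y - rsc p (covJ J nabla X Y)) = N X Y.
Proof.
rewrite !rsc2 /nijenhuis !tf' /covJ !(raddfD J, raddfB J, raddfN J); zabel.
Qed.

Lemma vidal_tor X Y : vidal J p q nabla X Y - vidal J p q nabla Y X - lbr L X Y
  = rsc ((p ^+ 2 + 4%:R * q)^-1) (N X Y).
Proof.
rewrite -SN /vidal (tf' X Y) /rsc [RHS]scalerBr; zabel.
Qed.
End Main.

Theorem mainTheorem1 (R : realType) (A : comAlgType R) (V : lmodType A)
  (L : LieRinehart V) (g : V -> V -> A) (nabla : V -> V -> V)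
  (J : {linear V -> V}) (p q : R) :
  pseudo_riemannian g ->
  levi_civita L g nabla ->
  (forall X, J (J X) = rsc p (J X) + rsc q X) ->
  0 < p ^+ 2 + 4%:R * q ->
  (forall X Y, g (J X) Y = g X (J Y)) ->
  [<-> integrable L (distD J p q) /\ integrable L (distD' J p q);
       forall X Y, nijenhuis L J X Y = 0;
       (forall X Y, twistL J p q nabla X Y = 0) /\
         (forall X Y, twistL' J p q nabla X Y = 0);
       torsion_free L (vidal J p q nabla)].
Proof.
move=> _ [_ htf _] hJ hD _.
have iD := @intD _ _ _ L J p q hJ hD.
have iD' := @intD' _ _ _ L J p q hJ hD.
have NI := @N_of_int _ _ _ L J p q hJ hD.
have IN := @int_of_N _ _ _ L J p q hJ hD.
have tE := @twistE _ _ _ L J p q nabla htf.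
have tE' := @twistE' _ _ _ L J p q nabla htf.
have vT := @vidal_tor _ _ _ L J p q nabla htf.
have h2 : (2%:R^-1 : R) != 0 by rewrite invr_eq0 pnatr_eq0.
have hk : ((p ^+ 2 + 4%:R * q)^-1 : R) != 0 by rewrite invr_eq0 gt_eqF.
tfae.
- by case=> /iD h1 /iD' h2'; exact: NI.
- move=> /IN [h1 h2']; split=> X Y; by rewrite ?tE ?tE' ?h1 ?h2' /rsc scaler0.
- case=> ht1 ht2 X Y; rewrite vT NI ?/rsc ?scaler0 // => X' Y'.
  + by apply: (@rsc_eq0 _ _ _ _ _ h2); rewrite -tE.
  + by apply: (@rsc_eq0 _ _ _ _ _ h2); rewrite -tE'.
- move=> hT.
  have hN : forall X Y, nijenhuis L J X Y = 0.
    by move=> X Y; apply: (@rsc_eq0 _ _ _ _ _ hk); rewrite -vT; apply: hT.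
  by have [h1 h2'] := IN hN; split; [apply/iD | apply/iD'].
Qed.
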